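(* Let $\mathbf{u}=(u_n)_{n\in\mathbb{N}}$ be a strictly increasing sequence of positive integers with $Q_\mathbf{u}<\infty$. Then the topology $\tau_\mathbf{u}$ on $\mathbb{T}$ is discrete; more precisely, $B^{\varrho_\mathbf{u}}_{1/(2Q_\mathbf{u})}(0)=\{0\}$ in $\mathbb{T}$.
   Context: $\mathbb{T}=\mathbb{R}/\mathbb{Z}$, $\|x\|$ is the distance from $x$ to the nearest integer and $d(x,y)=\|x-y\|$. The ratios of $\mathbf{u}$ are $q_0=u_0$ and $q_n=u_n/u_{n-1}$ for $n>0$; $Q_\mathbf{u}=\sup_n q_n$. For $x,y\in\mathbb{T}$, $\varrho_\mathbf{u}(x,y)=\sup_n\max\{d(x,y),d(u_nx,u_ny)\}$; $\tau_\mathbf{u}$ is the topology on $\mathbb{T}$ induced by this metric and $B^{\varrho_\mathbf{u}}_\varepsilon(0)=\{x\in\mathbb{T}:\varrho_\mathbf{u}(x,0)<\varepsilon\}$. *)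

(* Defs.v *)
From Stdlib Require Import Reals Lra.
From Coquelicot Require Import Coquelicot.
Open Scope R_scope.

(* The circle T = R/Z is modelled by real representatives; two reals
   denote the same point of T iff their difference is an integer. *)
Definition T_eq (x y : R) : Prop := exists k : Z, x - y = IZR k.

Definition tnorm (x : R) : R := Rmin (frac_part x) (1 - frac_part x).

Definition tdist (x y : R) : R := tnorm (x - y).

Definition ratio (u : nat -> nat) (n : nat) : R :=
  match n with
  | O => INR (u O)
  | S m => INR (u (S m)) / INR (u m)
  end.

Definition Qu (u : nat -> nat) : Rbar :=
  Lub_Rbar (fun r => exists n, r = ratio u n).

(* rho_u(x,y) = sup_n max{ d(x,y), d(u_n x, u_n y) }  (bounded by 1/2) *)
Definition rho (u : nat -> nat) (x y : R) : R :=
  real (Lub_Rbar (fun r => exists n,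
          r = Rmax (tdist x y) (tdist (INR (u n) * x) (INR (u n) * y)))).

(* Main.v *)
Require Import Defs.
From Stdlib Require Import Reals Lra Lia ZArith FunctionalExtensionality PropExtensionality.
From Coquelicot Require Import Coquelicot.
Open Scope R_scope.

Lemma up_shift x k : up (x + IZR k) = (up x + k)%Z.
Proof.
  symmetry; apply tech_up; rewrite plus_IZR; destruct (archimed x); lra.
Qed.

Lemma fp_shift x k : frac_part (x + IZR k) = frac_part x.
Proof.
  unfold frac_part, Int_part. rewrite up_shift.
  rewrite !minus_IZR, plus_IZR. ring.
Qed.

Lemma fp_id y : 0 <= y < 1 -> frac_part y = y.
Proof.
  intro H. unfold frac_part, Int_part.
  assert (up y = 1%Z) as ->. { symmetry; apply tech_up; simpl; lra. }
  simpl; lra.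
Qed.

Lemma tnorm_shift x k : tnorm (x + IZR k) = tnorm x.
Proof. unfold tnorm; now rewrite fp_shift. Qed.

Lemma tnorm_small y : Rabs y < 1/2 -> tnorm y = Rabs y.
Proof.
  intro H. unfold tnorm. destruct (Rle_lt_dec 0 y).
  - rewrite Rabs_right in * by lra. rewrite fp_id by lra.
    unfold Rmin; destruct Rle_dec; lra.
  - rewrite Rabs_left in * by lra.
    replace y with ((y + 1) + IZR (-1)) by (simpl; ring).
    rewrite fp_shift, fp_id by lra.
    unfold Rmin; destruct Rle_dec; lra.
Qed.

Lemma tnorm_int k : tnorm (IZR k) = 0.
Proof.
  replace (IZR k) with (0 + IZR k) by ring. rewrite tnorm_shift.
  rewrite tnorm_small; rewrite Rabs_R0; lra.
Qed.

Lemma tnorm_bound x : 0 <= tnorm x <= 1/2.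
Proof.
  unfold tnorm. destruct (base_fp x). unfold Rmin; destruct Rle_dec; lra.
Qed.

Lemma tnorm_round x : exists k, tnorm x = Rabs (x - IZR k).
Proof.
  unfold tnorm. destruct (base_fp x). unfold Rmin; destruct Rle_dec.
  - exists (Int_part x). unfold frac_part in *. rewrite Rabs_right; lra.
  - exists (Int_part x + 1)%Z. unfold frac_part in *. rewrite plus_IZR.
    rewrite Rabs_left; simpl; lra.
Qed.

Lemma lub_elem (E : R -> Prop) (M r : R) :
  (forall x, E x -> x <= M) -> E r ->
  r <= real (Lub_Rbar E) /\ real (Lub_Rbar E) <= M.
Proof.
  intros HM Hr. destruct (Lub_Rbar_correct E) as [ub lub].
  assert (h1 := ub r Hr).
  assert (h2 : Rbar_le (Lub_Rbar E) M) by (apply lub; intros x Hx; simpl; now apply HM).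
  destruct (Lub_Rbar E); simpl in *; try tauto; lra.
Qed.

Lemma u_ge u (hinc : forall n, (u n < u (S n))%nat) n : (n <= u n)%nat.
Proof. induction n; [lia|]. specialize (hinc n). lia. Qed.

Lemma core (u : nat -> nat) (Q : R)
  (hpos : forall n, (0 < u n)%nat)
  (hinc : forall n, (u n < u (S n))%nat)
  (HQ : 0 < Q) (Hr : forall n, ratio u n <= Q) x :
  tnorm x < 1/(2*Q) -> (forall n, tnorm (INR (u n) * x) < 1/(2*Q)) ->
  exists k, x = IZR k.
Proof.
  intros H0 Hn. set (c := 1/(2*Q)) in *.
  assert (Qc : Q * c = 1/2) by (unfold c; field; lra).
  assert (cp : 0 < c) by (unfold c; apply Rdiv_lt_0_compat; lra).
  assert (Hr0 := Hr O). simpl in Hr0.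
  assert (c <= 1/2).
  { assert (1 <= INR (u O)) by (apply (le_INR 1); apply hpos). nra. }
  destruct (tnorm_round x) as [k Hk]. set (y := x - IZR k) in *.
  assert (Hy : forall n, tnorm (INR (u n) * y) = tnorm (INR (u n) * x)).
  { intro n. replace (INR (u n) * x) with (INR (u n) * y + IZR (Z.of_nat (u n) * k))
      by (unfold y; rewrite mult_IZR, <- INR_IZR_INZ; ring).
    now rewrite tnorm_shift. }
  assert (Hind : forall n, Rabs (INR (u n) * y) < c).
  { induction n.
    - assert (Rabs (INR (u O) * y) < 1/2).
      { rewrite Rabs_mult, Rabs_right by (apply Rle_ge, pos_INR).
        assert (0 <= Rabs y) by apply Rabs_pos. nra. }
      rewrite <- tnorm_small by lra. rewrite Hy. apply Hn.
    - assert (Rabs (INR (u (S n)) * y) < 1/2).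
      { assert (e : INR (u (S n)) = ratio u (S n) * INR (u n)).
        { simpl. field. apply not_0_INR. specialize (hpos n). lia. }
        assert (0 <= ratio u (S n)).
        { simpl. apply Rmult_le_pos; [apply pos_INR|].
          apply Rlt_le, Rinv_0_lt_compat, lt_0_INR, hpos. }
        rewrite e, Rmult_assoc, Rabs_mult, (Rabs_right (ratio _ _)) by lra.
        assert (0 <= Rabs (INR (u n) * y)) by apply Rabs_pos.
        specialize (Hr (S n)). nra. }
      rewrite <- tnorm_small by lra. rewrite Hy. apply Hn. }
  exists k. destruct (Req_dec y 0) as [E|E]; [unfold y in E; lra|].
  exfalso. assert (ay : 0 < Rabs y) by (apply Rabs_pos_lt; auto).
  destruct (archimed_cor1 (2 * Rabs y)) as [N [HN1 HN2]]; [lra|].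
  specialize (Hind N). rewrite Rabs_mult, Rabs_right in Hind by (apply Rle_ge, pos_INR).
  pose proof (le_INR _ _ (u_ge u hinc N)).
  assert (0 < INR N) by (apply lt_0_INR; lia).
  assert (1 < 2 * Rabs y * INR N).
  { apply (Rmult_lt_compat_r (INR N)) in HN1; auto. rewrite Rinv_l in HN1; lra. }
  nra.
Qed.

Lemma rho_elem u x y n :
  Rmax (tdist x y) (tdist (INR (u n) * x) (INR (u n) * y)) <= rho u x y /\ rho u x y <= 1/2.
Proof.
  unfold rho. apply lub_elem.
  - intros r [m ->]. unfold tdist. apply Rmax_lub; apply tnorm_bound.
  - now exists n.
Qed.

Theorem propositionB (u : nat -> nat)
  (hpos : forall n, (0 < u n)%nat)
  (hinc : forall n, (u n < u (S n))%nat)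
  (hQ : is_finite (Qu u)) :
  (forall x : R, rho u x 0 < 1 / (2 * real (Qu u)) <-> T_eq x 0) /\
  (forall x : R, exists eps : R, 0 < eps /\
     forall y : R, rho u x y < eps -> T_eq y x).
Proof.
  set (Q := real (Qu u)).
  assert (Hr : forall n, ratio u n <= Q).
  { intro n. destruct (Lub_Rbar_correct (fun r => exists n, r = ratio u n)) as [ub _].
    assert (h := ub (ratio u n) (ex_intro _ n eq_refl)). fold (Qu u) in h.
    unfold Q. rewrite <- hQ in h. exact h. }
  assert (HQ : 0 < Q).
  { specialize (Hr O). simpl in Hr. assert (h := lt_0_INR _ (hpos O)). lra. }
  assert (P1 : forall x, rho u x 0 < 1 / (2 * Q) -> T_eq x 0).
  { intros x H. destruct (core u Q hpos hinc HQ Hr x) as [k Hk].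
    - destruct (rho_elem u x 0 O) as [h _]. unfold tdist in h.
      replace (x - 0) with x in h by ring.
      assert (h2 := Rmax_l (tnorm x) (tnorm (INR (u 0%nat) * x - INR (u 0%nat) * 0))). lra.
    - intro n. destruct (rho_elem u x 0 n) as [h _]. unfold tdist in h.
      replace (INR (u n) * x - INR (u n) * 0) with (INR (u n) * x) in h by ring.
      assert (h2 := Rmax_r (tnorm (x - 0)) (tnorm (INR (u n) * x))). lra.
    - exists k. lra. }
  split.
  - intro x. split; [apply P1|].
    intros [k Hk]. replace x with (IZR k) by lra.
    assert (rho u (IZR k) 0 = 0).
    { unfold rho.
      assert (E : forall n, Rmax (tdist (IZR k) 0) (tdist (INR (u n) * IZR k) (INR (u n) * 0)) = 0).
      { intro n. unfold tdist. replace (IZR k - 0) with (IZR k) by ring.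
        replace (INR (u n) * IZR k - INR (u n) * 0) with (IZR (Z.of_nat (u n) * k))
          by (rewrite mult_IZR, <- INR_IZR_INZ; ring).
        rewrite !tnorm_int. unfold Rmax; destruct Rle_dec; lra. }
      destruct (lub_elem (fun r => exists n, r = Rmax (tdist (IZR k) 0)
          (tdist (INR (u n) * IZR k) (INR (u n) * 0))) 0 0) as [a b].
      + intros r [n ->]. rewrite E. lra.
      + exists O. now rewrite E.
      + lra. }
    rewrite H. apply Rdiv_lt_0_compat; lra.
  - intro x. exists (1 / (2 * Q)). split; [apply Rdiv_lt_0_compat; lra|].
    intros y H. assert (Hxy : T_eq (x - y) 0).
    { apply P1.
      assert (e : rho u (x - y) 0 = rho u x y).
      { unfold rho. f_equal. f_equal. apply functional_extensionality. intro r.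
        apply propositional_extensionality. split; intros [n ->]; exists n; unfold tdist;
          f_equal; f_equal; ring. }
      now rewrite e. }
    destruct Hxy as [k Hk]. exists (-k)%Z. rewrite opp_IZR. lra.
Qed.
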